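(* Work in $\ell_1$ over $\mathbb{C}$ with sequences indexed by $\{0,1,2,\dots\}$ and standard basis $(e_k)$. Let $\xi$ be uniform on $\{-1,1\}$, and let $A$ be the diagonal operator $Ae_0=0$, $Ae_k=i\xi k\,e_k$ for $k\ge1$, so $e^{At}e_k=e^{i\xi kt}e_k$ and $\mathbb{E}e^{At}e_k=\cos(kt)e_k$. Let $\xi_1,\xi_2,\dots$ be i.i.d. copies of $\xi$ and $A_i$ defined as $A$ with $\xi_i$ in place of $\xi$. Then for every $T>0$ and every $n$ large enough (for every outcome $\omega$), $$\sup_{t\in[0,T]}\Big\|e^{A_1t/n}\cdots e^{A_nt/n}-\big(\mathbb{E}e^{At/n}\big)^n\Big\|_{\mathcal{L}(\ell_1)}\ge1;$$ in particular the law of large numbers fails in the operator norm topology for this sequence.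
   Context: $(\Omega,\mathcal{F},\Pr)$ is a probability space; $e^{Bt}=\sum_k t^kB^k/k!$ for bounded $B$ and, for diagonal $B$ with unbounded entries as here, $e^{Bt}$ is the diagonal operator with entries $e^{b_{kk}t}$; $\mathbb{E}$ of a random operator is the Pettis integral (entrywise expectation). *)

(* Defs.v *)
From HB Require Import structures.
From mathcomp Require Import all_boot all_order all_algebra.
From mathcomp Require Import all_classical all_reals all_analysis.
From mathcomp Require Import complex.
Set Implicit Arguments. Unset Strict Implicit. Unset Printing Implicit Defensive.
Import Order.TTheory GRing.Theory Num.Theory.
Local Open Scope classical_set_scope.
Local Open Scope ring_scope.
Local Open Scope complex_scope.

Section Defs.
Variable R : realType.
Local Notation C := R[i].

Definition cexp (z : C) : C :=
  (expR (complex.Re z) * cos (complex.Im z)) +i* (expR (complex.Re z) * sin (complex.Im z)).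

Definition cabs (z : C) : R := Normc.normc z.

Definition sequ := nat -> C.
Definition op := sequ -> sequ.

(* ell_1 norm (possibly +oo; x is in ell_1 iff it is finite) *)
Definition l1norm (x : sequ) : \bar R := (\sum_(0 <= k <oo) (cabs (x k))%:E)%E.

Definition opnorm (L : op) : \bar R :=
  ereal_sup [set l1norm (L x) | x in [set x : sequ | (l1norm x <= 1)%E]].

Definition op_sub (L1 L2 : op) : op := fun x k => L1 x k - L2 x k.

Definition diag (b : nat -> C) : op := fun x k => b k * x k.

Definition exp_diag (b : nat -> C) (t : R) : op := diag (fun k => cexp (b k * t%:C)).

Definition prod_ops (F : nat -> op) (n : nat) : op :=
  foldr (fun i acc => F i \o acc) id (iota 1 n).

Definition op_pow (L : op) (n : nat) : op := iter n (fun M => L \o M) id.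

Definition A_diag (xi : R) : nat -> C := fun k => 'i * (xi * k%:R)%:C.

Definition cexpect d (T : measurableType d) (P : probability T R) (Z : T -> C) : C :=
  fine ('E_P[fun w => complex.Re (Z w)]) +i* fine ('E_P[fun w => complex.Im (Z w)]).

(* Pettis (entrywise) expectation of a random diagonal operator diag (D w) *)
Definition expect_diag d (T : measurableType d) (P : probability T R)
  (D : T -> nat -> C) : op := diag (fun k => cexpect P (fun w => D w k)).

Definition mutually_independent d (T : measurableType d) (P : probability T R)
  (X : nat -> T -> R) : Prop :=
  forall (I : seq nat) (B : nat -> set R), uniq I ->
    (forall i, measurable (B i)) ->
    P (\bigcap_(i in [set j | j \in I]) (X i @^-1` B i)) =
    (\prod_(i <- I) P (X i @^-1` B i))%E.

End Defs.

(* Main.v *)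
Require Import Defs.
From HB Require Import structures.
From mathcomp Require Import all_boot all_order all_algebra.
From mathcomp Require Import all_classical all_reals all_analysis.
From mathcomp Require Import complex.
From mathcomp Require Import lra ring.
Import Order.TTheory GRing.Theory Num.Theory.
Local Open Scope classical_set_scope.
Local Open Scope ring_scope.
Local Open Scope complex_scope.

Section H.
Variable R : realType.
Local Notation C := R[i].

Lemma cabs_ge0 (z : C) : 0 <= cabs z.
Proof. by case: z => a b; rewrite /cabs /= sqrtr_ge0. Qed.

Lemma l1norm_single (x : sequ R) k : (forall j, j != k -> x j = 0) ->
  l1norm x = (cabs (x k))%:E.
Proof.
move=> H; rewrite /l1norm (nneseries_split 0 k.+1); last by move=> j _; rewrite lee_fin cabs_ge0.
rewrite add0n eseries0 ?adde0; last first.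
  move=> i ki _; rewrite H ?/cabs ?Normc.normc0 //.
  by apply/eqP => ik; move: ki; rewrite ik ltnn.
rewrite big_nat_recr //= big1_seq ?add0e //.
move=> i; rewrite mem_index_iota => /andP[_ ik].
by rewrite H ?/cabs ?Normc.normc0 // ltn_eqF.
Qed.

Lemma prod_diag (b : nat -> nat -> C) (s : seq nat) (x : sequ R) j :
  foldr (fun i acc => diag (b i) \o acc) id s x j = (\prod_(i <- s) b i j) * x j.
Proof.
elim: s => [|a s IH] /=; first by rewrite big_nil mul1r.
by rewrite /diag IH big_cons mulrA.
Qed.

Lemma pow_diag (c : nat -> C) n (x : sequ R) j :
  op_pow (diag c) n x j = c j ^+ n * x j.
Proof.
elim: n => [|n IH]; first by rewrite /= expr0 mul1r.
change (diag c (op_pow (diag c) n x) j = c j ^+ n.+1 * x j).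
by rewrite /diag IH exprS mulrA.
Qed.

Lemma iC_mul (a b : R) : 'i * a%:C * b%:C = 0 +i* (a * b) :> C.
Proof. by simpc. Qed.

Lemma cexp_i (c : R) : cexp (0 +i* c) = cos c +i* sin c.
Proof. by rewrite /cexp /= expR0 !mul1r. Qed.

Lemma Exi0 d (Om : measurableType d) (P : probability Om R) (xi : Om -> R) :
  measurable_fun setT xi -> (forall w, xi w = 1 \/ xi w = -1) ->
  P (xi @^-1` [set 1]) = (2^-1)%:E -> ('E_P[xi] = 0)%E.
Proof.
move=> mxi xiv xiu.
set A := xi @^-1` [set 1].
have mA : measurable A by have := mxi measurableT _ (measurable_set1 1); rewrite setTI.
have IA : (\1_A : Om -> R) \in Lfun P 1.
  by apply/Lfun1_integrable; exact: integrable_indic.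
have -> : xi = (2 \o* (\1_A : Om -> R)) \- cst 1.
  apply/funext => w /=; rewrite indicE.
  case: (xiv w) => e.
    by rewrite mem_set /A /= ?e //; lra.
  rewrite memNset; first by rewrite e /= mul0r sub0r.
  rewrite /A /preimage /= e => h.
  have : (-1 : R) = 1 by exact: h.
  lra.
rewrite expectationB; last exact: Lfun_cst.
  rewrite expectationZl // expectation_indic // expectation_cst.
  rewrite /A xiu -EFinM -EFinB; congr EFin; field.
  by [].
exact: (@Lfun_scale _ _ _ _ _ 2 1).
Qed.


Lemma cexp_pm (x : R) k (s : R) : x = 1 \/ x = -1 -> k%:R * s = pi / 2 ->
  cexp (A_diag x k * s%:C) = 0 +i* x.
Proof.
move=> xv ks; rewrite /A_diag iC_mul -mulrA ks cexp_i.
case: xv => ->.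
  by rewrite mul1r cos_pihalf sin_pihalf.
by rewrite mulN1r cosN sinN cos_pihalf sin_pihalf.
Qed.

Lemma cabs_prod (s : seq nat) (F : nat -> C) :
  (forall i, cabs (F i) = 1) -> cabs (\prod_(i <- s) F i) = 1.
Proof.
move=> H; apply: (big_ind (fun z => cabs z = 1)).
- exact: Normc.normc1.
- by move=> a b ha hb; rewrite /cabs Normc.normcM -/(cabs a) -/(cabs b) ha hb mulr1.
- by move=> i _; exact: H.
Qed.

Lemma cabs_pm (x : R) : x = 1 \/ x = -1 -> cabs (0 +i* x) = 1.
Proof.
by case=> ->; rewrite /cabs /= expr0n /= add0r ?sqrrN expr1n sqrtr1.
Qed.

End H.

Theorem mainTheorem10 (R : realType) (d : measure_display) (Omega : measurableType d)
  (P : probability Omega R) (xi : Omega -> R) (xis : nat -> Omega -> R)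
  (xi_meas : measurable_fun setT xi)
  (xi_val : forall w, xi w = 1 \/ xi w = -1)
  (xi_unif : P (xi @^-1` [set 1]) = (2^-1)%:E)
  (xis_meas : forall i, measurable_fun setT (xis i))
  (xis_val : forall i w, xis i w = 1 \/ xis i w = -1)
  (xis_law : forall i (B : set R), measurable B ->
     P (xis i @^-1` B) = P (xi @^-1` B))
  (xis_indep : mutually_independent P xis) :
  forall T : R, 0 < T ->
  exists N : nat, forall n : nat, (N <= n)%N -> forall w : Omega,
    (1 <= ereal_sup [set opnorm
        ((op_sub (prod_ops (fun i => exp_diag (A_diag (xis i w)) (t / n%:R)) n)
                (op_pow (expect_diag P (fun w' => fun k =>
                            cexp (A_diag (xi w') k * (t / n%:R)%:C))) n))%R)
       | t in `[0%R, T]%classic])%E.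
Proof.
move=> T T0; exists 1%N => n n1 w.
pose k := (Num.truncn ((n%:R : R) * pi / (2 * T))).+1.
have k0 : (0 : R) < k%:R by rewrite ltr0n.
have n0 : (0 : R) < n%:R by rewrite ltr0n.
have kgt : n%:R * pi / (2 * T) < k%:R by exact: truncnS_gt.
pose t : R := n%:R * (pi / (2 * k%:R)).
have pi0 : (0 : R) < pi := pi_gt0 R.
have tT : t \in `[0, T].
  rewrite in_itv /=; apply/andP; split.
    by rewrite /t mulr_ge0 // ?divr_ge0 // ?mulr_ge0 // ltW.
  rewrite /t mulrA ler_pdivrMr ?mulr_gt0 //.
  rewrite ltr_pdivrMr ?mulr_gt0 // in kgt.
  nra.
have ks : k%:R * (t / n%:R) = pi / 2.
  rewrite /t; field; apply/andP; split; apply/eqP; lra.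
pose e : sequ R := fun j => if j == k then 1 else 0.
have e_ne : forall j, j != k -> e j = 0 by move=> j /negbTE; rewrite /e => ->.
apply: le_trans; last first.
  apply: ereal_sup_ubound; exists t; first exact: tT.
  reflexivity.
apply: le_trans; last first.
  apply: ereal_sup_ubound; exists e; last reflexivity.
  rewrite /= (@l1norm_single R _ _ e_ne) /e eqxx /cabs Normc.normc1 //.
set D := op_sub _ _.
have Dne : forall j, j != k -> D e j = 0.
  move=> j jk; rewrite /D /op_sub /prod_ops prod_diag /expect_diag pow_diag e_ne //.
  by rewrite !mulr0 subr0.
rewrite (@l1norm_single R _ _ Dne).
rewrite /D /op_sub /prod_ops prod_diag /expect_diag pow_diag /e eqxx !mulr1.
have -> : (fun w0 : Omega => cexp (A_diag (xi w0) k * (t / n%:R)%:C))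
    = (fun w0 => (0:R) +i* xi w0).
  by apply/funext => w0; rewrite cexp_pm.
have -> : cexpect P (fun w0 => (0:R) +i* xi w0) = 0.
  rewrite /cexpect /=.
  have -> : ('E_P[fun _ : Omega => 0%R])%E = 0%E := expectation_cst P 0%R.
  rewrite (@Exi0 R _ _ P xi xi_meas xi_val xi_unif) /=.
  by [].
rewrite expr0n (gtn_eqF n1) subr0 (eq_bigr (fun i => (0:R) +i* xis i w)); last first.
  by move=> i _; rewrite cexp_pm.
rewrite cabs_prod //.
by move=> i; rewrite cabs_pm.
Qed.
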